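(* Let $X$ be sufficiently large. Suppose that $\delta \ge X^{-1/10}$ and $\theta\in\mathbb{R}$ satisfy $|\widehat{g_{X,\Box}}(\theta)| \ge \delta X$. Then there exists a natural number $q\ll (\log X)^2 \delta^{-4}$ such that \[\|q\theta\|_{\mathbb{R}/\mathbb{Z}}\ll (\log X)^2 \delta^{-4} X^{-1}.\] (Implied constants may depend on the fixed function $w$.)
   Context: Fix a smooth function $w:\mathbb{R}\to[0,1]$ supported on $[-1,1]$ with $w(x)\ge 1/2$ for $x\in[-1/2,1/2]$ and $|\widehat w(t)|\ll e^{-\sqrt{|t|}}$ for all $t\in\mathbb{R}$, where $\widehat w(t)=\int_{\mathbb R}w(x)e(-tx)\,dx$ and $e(s)=e^{2\pi i s}$. Define $g_{X,\Box}:\mathbb{Z}\to\mathbb{R}$ by $g_{X,\Box}(x)=t\,w(t^2/X)$ if $|x|=t^2$ with $t\in\mathbb{N}$, and $g_{X,\Box}(x)=0$ if $|x|$ is not a square. Let $\widehat{g_{X,\Box}}(\theta)=\sum_x g_{X,\Box}(x)e(-\theta x)$. $\|\cdot\|_{\mathbb R/\mathbb Z}$ is distance to the nearest integer. *)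

(* Defs.v *)
From Stdlib Require Import Reals ZArith Arith.
From Coquelicot Require Import Coquelicot.
Open Scope R_scope.

(* e(s) = exp(2 pi i s); all complex quantities are written through their
   real and imaginary parts. *)

(* Fourier transform of w (supported on [-1,1], so the integral over R is
   the integral over [-1,1]):  hat w(t) = int w(x) e(-tx) dx. *)
Definition what_re (w : R -> R) (t : R) : R :=
  RInt (fun x => w x * cos (2 * PI * t * x)) (-1) 1.
Definition what_im (w : R -> R) (t : R) : R :=
  - RInt (fun x => w x * sin (2 * PI * t * x)) (-1) 1.
Definition what_abs (w : R -> R) (t : R) : R :=
  sqrt (what_re w t ^ 2 + what_im w t ^ 2).

Definition g_box (w : R -> R) (X : R) (x : Z) : R :=
  let n := Z.abs_nat x in
  let t := Nat.sqrt n in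
  if Nat.eqb (t * t) n then INR t * w (INR n / X) else 0.

(* hat g(theta) = sum_x g(x) e(-theta x).  Since w vanishes outside [-1,1],
   g_{X,Box}(x) = 0 whenever |x| > X, so the sum over Z equals the finite sum
   over |x| <= N with N = Z.to_nat (up X) (> X). *)
Definition gN (X : R) : nat := Z.to_nat (up X).
Definition ghat_re (w : R -> R) (X theta : R) : R :=
  sum_f_R0 (fun k => let x := (Z.of_nat k - Z.of_nat (gN X))%Z in
                     g_box w X x * cos (2 * PI * theta * IZR x)) (2 * gN X).
Definition ghat_im (w : R -> R) (X theta : R) : R :=
  - sum_f_R0 (fun k => let x := (Z.of_nat k - Z.of_nat (gN X))%Z in
                       g_box w X x * sin (2 * PI * theta * IZR x)) (2 * gN X).
Definition ghat_abs (w : R -> R) (X theta : R) : R :=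
  sqrt (ghat_re w X theta ^ 2 + ghat_im w X theta ^ 2).

Definition distZ (r : R) : R :=
  Rmin (r - IZR (Int_part r)) (IZR (Int_part r) + 1 - r).

(* Main.v *)
Require Import Defs.
From Stdlib Require Import Reals Lra Lia ZArith Arith.
From Coquelicot Require Import Coquelicot.
Open Scope R_scope.


Fixpoint sm (f : nat -> R) (n : nat) : R :=
  match n with O => 0 | S n' => sm f n' + f n' end.

Lemma sm_0 f : sm f 0 = 0. Proof. reflexivity. Qed.
Lemma sm_S f n : sm f (S n) = sm f n + f n. Proof. reflexivity. Qed.

Lemma sm_ext f g n : (forall i, (i < n)%nat -> f i = g i) -> sm f n = sm g n.
Proof. induction n; intros H; simpl; auto. rewrite IHn; [rewrite H|]; auto; intros; apply H; lia. Qed.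

Lemma sm_le f g n : (forall i, (i < n)%nat -> f i <= g i) -> sm f n <= sm g n.
Proof. induction n; intros H; simpl. lra. assert (sm f n <= sm g n) by (apply IHn; intros; apply H; lia).
 assert (f n <= g n) by (apply H; lia). lra. Qed.

Lemma sm_plus f g n : sm (fun i => f i + g i) n = sm f n + sm g n.
Proof. induction n; simpl; lra. Qed.
Lemma sm_minus f g n : sm (fun i => f i - g i) n = sm f n - sm g n.
Proof. induction n; simpl; lra. Qed.
Lemma sm_scal c f n : sm (fun i => c * f i) n = c * sm f n.
Proof. induction n; simpl; [lra|]. rewrite IHn; ring. Qed.
Lemma sm_const c n : sm (fun _ => c) n = INR n * c.
Proof. induction n; simpl sm; [simpl; lra|]. rewrite IHn, S_INR; ring. Qed.
Lemma sm_zero n : sm (fun _ => 0) n = 0.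
Proof. rewrite sm_const; ring. Qed.

Lemma sm_nonneg f n : (forall i, (i < n)%nat -> 0 <= f i) -> 0 <= sm f n.
Proof. intros H. rewrite <- (sm_zero n). apply sm_le; auto. Qed.

Lemma sm_abs f n : Rabs (sm f n) <= sm (fun i => Rabs (f i)) n.
Proof. induction n; simpl. rewrite Rabs_R0; lra.
 eapply Rle_trans; [apply Rabs_triang|]. lra. Qed.

Lemma sm_split f n m : sm f (n + m) = sm f n + sm (fun i => f (n + i)%nat) m.
Proof. induction m; simpl. rewrite Nat.add_0_r; lra. rewrite Nat.add_succ_r; simpl. rewrite IHm; lra. Qed.

Lemma sm_shift1 f n : sm f (S n) = f O + sm (fun i => f (S i)) n.
Proof. replace (S n) with (1 + n)%nat by lia. rewrite sm_split. simpl. lra. Qed.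

Lemma sm_rev f n : sm f n = sm (fun i => f (n - 1 - i)%nat) n.
Proof. induction n. reflexivity.
 rewrite sm_S, (sm_shift1 (fun i => f (S n - 1 - i)%nat)), IHn.
 replace (S n - 1 - 0)%nat with n by lia.
 rewrite (sm_ext (fun i => f (S n - 1 - S i)%nat) (fun i => f (n - 1 - i)%nat)). lra.
 intros; f_equal; lia. Qed.

Lemma sm_swap (F : nat -> nat -> R) n m :
  sm (fun i => sm (fun j => F i j) m) n = sm (fun j => sm (fun i => F i j) n) m.
Proof. induction n; simpl. rewrite sm_zero; auto.
 rewrite IHn, <- sm_plus. apply sm_ext; intros; simpl; auto. Qed.

Lemma sm_block f K W : sm f (K * W) = sm (fun k => sm (fun i => f (k * W + i)%nat) W) K.
Proof. induction K; simpl. auto. replace (W + K * W)%nat with (K * W + W)%nat by lia.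
 rewrite sm_split, IHK. auto. Qed.

Lemma sm_resid f K q : sm f (K * q) = sm (fun r => sm (fun m => f (r + m * q)%nat) K) q.
Proof. rewrite sm_block, sm_swap. apply sm_ext; intros; apply sm_ext; intros. f_equal; lia. Qed.

Lemma sm_mono_n f n m : (forall i, 0 <= f i) -> (n <= m)%nat -> sm f n <= sm f m.
Proof. intros H Hnm. replace m with (n + (m - n))%nat by lia. rewrite sm_split.
 assert (0 <= sm (fun i => f (n + i)%nat) (m - n)) by (apply sm_nonneg; auto). lra. Qed.

Lemma sm_exists_gt f n c : INR n * c < sm f n -> exists i, (i < n)%nat /\ c < f i.
Proof. intros H. destruct (Classical_Prop.classic (exists i, (i < n)%nat /\ c < f i)) as [|Hn]; auto.
 exfalso. assert (sm f n <= sm (fun _ => c) n). { apply sm_le; intros i Hi.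
 destruct (Rle_lt_dec (f i) c); auto. exfalso; apply Hn; eauto. }
 rewrite sm_const in H0. lra. Qed.

Lemma sum_f_R0_sm f n : sum_f_R0 f n = sm f (S n).
Proof. induction n; simpl. lra. simpl in IHn. rewrite IHn. reflexivity. Qed.

Definition ind (a b : R) : R := if Rle_dec a b then 1 else 0.
Lemma ind_01 a b : 0 <= ind a b <= 1.
Proof. unfold ind; destruct Rle_dec; lra. Qed.
Lemma ind_1 a b : a <= b -> ind a b = 1.
Proof. unfold ind; destruct Rle_dec; lra. Qed.
Lemma ind_0 a b : b < a -> ind a b = 0.
Proof. unfold ind; destruct Rle_dec; lra. Qed.
Lemma ind_pos a b : 0 < ind a b -> a <= b.
Proof. unfold ind; destruct Rle_dec; lra. Qed.

Lemma abs_le_inv a b : Rabs a <= b -> - b <= a <= b.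
Proof. unfold Rabs; destruct Rcase_abs; lra. Qed.
Lemma abs_le_inv2 a b : - b <= a <= b -> Rabs a <= b.
Proof. unfold Rabs; destruct Rcase_abs; lra. Qed.


Lemma count_interval_aux x y n :
  sm (fun i => ind x (INR i) * ind (INR i) y) n <= Rmax 0 (Rmin (INR n) (y + 1) - x).
Proof. induction n; simpl sm.
 - simpl INR. unfold Rmax, Rmin; repeat destruct Rle_dec; lra.
 - rewrite S_INR. unfold ind in *. destruct (Rle_dec x (INR n)); destruct (Rle_dec (INR n) y);
   revert IHn; unfold Rmax, Rmin; repeat destruct Rle_dec; intros; lra.
Qed.

Lemma count_interval x y n :
  sm (fun i => ind x (INR i) * ind (INR i) y) n <= Rmax 0 (y + 1 - x).
Proof. eapply Rle_trans; [apply count_interval_aux|]. unfold Rmax, Rmin; repeat destruct Rle_dec; lra. Qed.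

Definition is01 (f : nat -> R) := forall i, f i = 0 \/ f i = 1.

Lemma is01_nonneg f : is01 f -> forall i, 0 <= f i.
Proof. intros H i; destruct (H i); lra. Qed.

Lemma sm_pos_exists f n : is01 f -> 0 < sm f n -> exists i, (i < n)%nat /\ f i = 1.
Proof. intros H Hs. destruct (sm_exists_gt f n 0) as [i [Hi Hf]]. lra.
 exists i; split; auto. destruct (H i); lra. Qed.

Lemma sm_two_exists f n : is01 f -> 1 < sm f n ->
  exists i i', (i < i')%nat /\ (i' < n)%nat /\ f i = 1 /\ f i' = 1.
Proof. intros H. induction n; simpl sm; intros Hs. lra.
 destruct (Rlt_le_dec 1 (sm f n)) as [h|h].
 - destruct (IHn h) as [i [i' [? [? [? ?]]]]]. exists i, i'; repeat split; auto; lia.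
 - destruct (H n) as [e|e]; [lra|].
   destruct (sm_pos_exists f n H) as [i [Hi Hfi]]. lra.
   exists i, n; repeat split; auto.
Qed.

Lemma window_count f n W c : (forall i, 0 <= f i) -> (1 <= W)%nat ->
  (forall k, sm (fun i => f (k * W + i)%nat) W <= c) ->
  sm f n <= (INR n / INR W + 1) * c.
Proof. intros Hf HW Hc.
 assert (Hc0 : 0 <= c). { eapply Rle_trans; [|apply (Hc O)]. apply sm_nonneg; auto. }
 set (K := S (n / W)).
 assert (HK : (n <= K * W)%nat). { unfold K. pose proof (Nat.mul_succ_div_gt n W). lia. }
 eapply Rle_trans. apply (sm_mono_n f n (K * W)); auto.
 rewrite sm_block. eapply Rle_trans. apply (sm_le _ (fun _ => c)). intros; apply Hc.
 rewrite sm_const. apply Rmult_le_compat_r; auto.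
 unfold K. rewrite S_INR. apply Rplus_le_compat_r.
 assert (HW' : 0 < INR W) by (apply lt_0_INR; lia).
 apply (Rmult_le_reg_r (INR W)); auto. unfold Rdiv. rewrite Rmult_assoc, Rinv_l by lra.
 rewrite Rmult_1_r, Rmult_comm, <- mult_INR. apply le_INR. apply Nat.Div0.mul_div_le.
Qed.


Lemma nat_floor r : 0 <= r -> exists n : nat, INR n <= r < INR n + 1.
Proof. intros Hr. destruct (base_Int_part r) as [H1 H2].
 assert (Hz : (0 <= Int_part r)%Z). { assert (IZR (-1) < IZR (Int_part r)) by lra.
   apply lt_IZR in H. lia. }
 exists (Z.to_nat (Int_part r)). rewrite INR_IZR_INZ, Z2Nat.id by auto. lra. Qed.

Lemma nat_ceil r : 0 <= r -> exists n : nat, r < INR n <= r + 1.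
Proof. intros Hr. destruct (nat_floor r Hr) as [n Hn]. exists (S n). rewrite S_INR. lra. Qed.

Definition nearZ (x e : R) := exists n : Z, Rabs (x - IZR n) <= e.

Lemma near_sub x y e1 e2 : nearZ x e1 -> nearZ y e2 -> nearZ (x - y) (e1 + e2).
Proof. intros [n Hn] [m Hm]. exists (n - m)%Z. rewrite minus_IZR.
 replace (x - y - (IZR n - IZR m)) with ((x - IZR n) - (y - IZR m)) by ring.
 eapply Rle_trans; [apply Rabs_triang|]. rewrite Rabs_Ropp. lra. Qed.

Lemma near_shift x k e : nearZ (x + IZR k) e -> nearZ x e.
Proof. intros [n Hn]. exists (n - k)%Z. rewrite minus_IZR.
 replace (x - (IZR n - IZR k)) with (x + IZR k - IZR n) by ring. auto. Qed.

Lemma near_small x e : Rabs x < 1/2 - e -> nearZ x e -> Rabs x <= e.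
Proof. intros Hx [n Hn]. destruct (Z.eq_dec n 0) as [->|hn].
 - rewrite Rminus_0_r in Hn; auto.
 - exfalso. assert (1 <= Rabs (IZR n)). { rewrite <- abs_IZR. apply IZR_le. lia. }
   assert (Rabs (IZR n) <= Rabs x + Rabs (x - IZR n)).
   { replace (IZR n) with (x - (x - IZR n)) at 1 by ring. eapply Rle_trans; [apply Rabs_triang|].
     rewrite Rabs_Ropp; lra. }
   lra. Qed.

Lemma sm_exists_ge f n c : (1 <= n)%nat -> INR n * c <= sm f n -> exists i, (i < n)%nat /\ c <= f i.
Proof. intros Hn H. destruct (Classical_Prop.classic (exists i, (i < n)%nat /\ c <= f i)) as [|Hno]; auto.
 exfalso. destruct n. lia.
 assert (sm f (S n) < sm (fun _ => c) (S n)).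
 { simpl. apply Rplus_le_lt_compat. apply sm_le; intros i Hi.
   destruct (Rle_lt_dec c (f i)); [exfalso; apply Hno; exists i; split; auto; lia|lra].
   destruct (Rle_lt_dec c (f n)); [exfalso; apply Hno; exists n; split; auto; lia|lra]. }
 rewrite sm_const in H0. lra. Qed.

Lemma find_q (f : nat -> R) (alpha eps : R) (T : nat) :
  is01 f -> (forall i, f i = 1 -> nearZ (INR i * alpha) eps) ->
  2 <= sm f T ->
  exists q : nat, (1 <= q)%nat /\ INR q <= 2 * INR T / sm f T /\ nearZ (INR q * alpha) (eps + eps).
Proof. intros H01 Hnear HM. set (M := sm f T) in *.
 assert (HM0 : 0 < M) by lra.
 destruct (nat_ceil (2 * INR T / M)) as [W HW].
 { apply Rmult_le_pos. pose proof (pos_INR T); lra. left; apply Rinv_0_lt_compat; lra. }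
 assert (HW1 : (1 <= W)%nat). { destruct W. simpl in HW.
   assert (0 <= 2 * INR T / M). { apply Rmult_le_pos. pose proof (pos_INR T); lra. left; apply Rinv_0_lt_compat; lra. }
   lra. lia. }
 assert (HWpos : 0 < INR W) by (apply lt_0_INR; lia).
 destruct (Classical_Prop.classic (exists k, 1 < sm (fun i => f (k * W + i)%nat) W)) as [[k Hk]|Hno].
 - destruct (sm_two_exists (fun i => f (k * W + i)%nat) W) as [i [i' [Hii [Hi' [Hf1 Hf2]]]]]; auto.
   { intros j; apply H01. }
   exists (i' - i)%nat. split; [lia|]. split.
   + assert (INR (i' - i) <= INR W - 1). { rewrite minus_INR by lia.
       assert (INR i' + 1 <= INR W) by (rewrite <- S_INR; apply le_INR; lia). pose proof (pos_INR i). lra. }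
     lra.
   + replace (INR (i' - i) * alpha) with (INR (k * W + i') * alpha - INR (k * W + i) * alpha).
     apply near_sub; apply Hnear; auto.
     rewrite minus_INR by lia. rewrite !plus_INR. ring.
 - exfalso. assert (M <= (INR T / INR W + 1) * 1).
   { apply window_count; auto. apply is01_nonneg; auto. intros k.
     destruct (Rle_lt_dec (sm (fun i => f (k * W + i)%nat) W) 1); auto. exfalso; apply Hno; eauto. }
   assert (INR T / INR W < M / 2).
   { apply (Rmult_lt_reg_r (INR W)); auto. unfold Rdiv. rewrite Rmult_assoc, Rinv_l by lra.
     apply (Rmult_lt_reg_r (2 / M)). apply Rmult_lt_0_compat; [lra|apply Rinv_0_lt_compat; lra].
     replace (M * / 2 * INR W * (2 / M)) with (INR W) by (field; lra).
     replace (INR T * 1 * (2 / M)) with (2 * INR T / M) by (field; lra). lra. }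
   lra.
Qed.


Lemma window_bound (g : nat -> R) (beta eps : R) (W : nat) (k : nat) :
  is01 g -> 0 < eps <= 1/16 -> 0 < Rabs beta -> INR W * Rabs beta <= 1/4 ->
  (forall m m', g m = 1 -> g m' = 1 -> nearZ ((INR m' - INR m) * beta) (eps + eps)) ->
  sm (fun i => g (k * W + i)%nat) W <= 2 * (2 * eps / Rabs beta) + 1.
Proof. intros H01 He Hb HW Hg. set (A := 2 * eps / Rabs beta).
 assert (HA : 0 <= A) by (unfold A; apply Rmult_le_pos; [lra| left; apply Rinv_0_lt_compat; lra]).
 destruct (Rle_lt_dec (sm (fun i => g (k * W + i)%nat) W) 0) as [h|h]. lra.
 destruct (sm_pos_exists (fun i => g (k * W + i)%nat) W) as [i0 [Hi0 Hg0]]; auto. intros j; apply H01.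
 eapply Rle_trans. apply (sm_le _ (fun i => ind (INR i0 - A) (INR i) * ind (INR i) (INR i0 + A))).
 - intros i Hi. destruct (H01 (k * W + i)%nat) as [e|e]; rewrite e.
   + apply Rmult_le_pos; apply ind_01.
   + pose proof (Hg _ _ Hg0 e) as Hn.
     replace (INR (k * W + i) - INR (k * W + i0)) with (INR i - INR i0) in Hn by (rewrite !plus_INR; ring).
     assert (Hlt : Rabs ((INR i - INR i0) * beta) < 1/2 - (eps + eps)).
     { rewrite Rabs_mult. assert (Rabs (INR i - INR i0) < INR W).
       { apply Rabs_def1. assert (INR i + 1 <= INR W) by (rewrite <- S_INR; apply le_INR; lia).
         pose proof (pos_INR i0); lra. assert (INR i0 + 1 <= INR W) by (rewrite <- S_INR; apply le_INR; lia).
         pose proof (pos_INR i); lra. }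
       assert (Rabs (INR i - INR i0) * Rabs beta < INR W * Rabs beta) by (apply Rmult_lt_compat_r; lra). lra. }
     pose proof (near_small _ _ Hlt Hn) as Hs. rewrite Rabs_mult in Hs.
     assert (Rabs (INR i - INR i0) <= A).
     { unfold A. apply (Rmult_le_reg_r (Rabs beta)); auto. unfold Rdiv. rewrite Rmult_assoc, Rinv_l by lra. lra. }
     rewrite !ind_1. lra. apply abs_le_inv in H; lra. apply abs_le_inv in H; lra.
 - eapply Rle_trans; [apply count_interval|]. unfold Rmax; destruct Rle_dec; lra.
Qed.

Lemma refine_q (f : nat -> R) (alpha eps : R) (T q : nat) (a0 : Z) :
  is01 f -> (forall i, f i = 1 -> nearZ (INR i * alpha) eps) ->
  0 < eps <= 1/16 -> (1 <= q)%nat -> INR q <= INR T ->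
  Rabs (INR q * alpha - IZR a0) <= 2 * eps ->
  384 * eps * INR T <= sm f T -> 4 * INR q <= sm f T ->
  Rabs (INR q * alpha - IZR a0) <= 8 * eps * INR q / sm f T.
Proof. intros H01 Hnear He Hq HqT Hb0 HM1 HM2. set (M := sm f T) in *.
 set (beta := INR q * alpha - IZR a0) in *. set (b := Rabs beta) in *.
 assert (Hqr : 1 <= INR q) by (apply (le_INR 1); auto).
 assert (HM : 4 <= M) by lra.
 destruct (Rle_lt_dec b 0) as [hb|hb].
 { assert (0 <= 8 * eps * INR q / M). { apply Rmult_le_pos; [nra|left; apply Rinv_0_lt_compat; lra]. }
   lra. }
 set (K := S (T / q)).
 assert (HK : (T <= K * q)%nat). { unfold K. pose proof (Nat.mul_succ_div_gt T q). lia. }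
 assert (HKr : INR q * INR K <= INR T + INR q).
 { unfold K. rewrite S_INR. assert (INR q * INR (T / q) <= INR T).
   { rewrite <- mult_INR. apply le_INR. apply Nat.Div0.mul_div_le. } lra. }
 assert (HMs : M <= sm (fun r => sm (fun m => f (r + m * q)%nat) K) q).
 { rewrite <- sm_resid. apply sm_mono_n; auto. apply is01_nonneg; auto. }
 destruct (sm_exists_ge (fun r => sm (fun m => f (r + m * q)%nat) K) q (M / INR q)) as [r [Hr Hgr]]; auto.
 { replace (INR q * (M / INR q)) with M by (field; lra). auto. }
 set (g := fun m => f (r + m * q)%nat) in Hgr.
 assert (Hg01 : is01 g) by (intros m; apply H01).
 assert (Hb8 : b <= 1/8) by lra.
 destruct (nat_floor (1 / (4 * b))) as [W HW]. { left. apply Rdiv_lt_0_compat; lra. }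
 assert (H4b : 2 <= 1 / (4 * b)). { apply (Rmult_le_reg_r (4 * b)). lra. unfold Rdiv. rewrite Rmult_assoc, Rinv_l by lra. lra. }
 assert (HW1 : 1 / (8 * b) <= INR W).
 { assert (1 / (8 * b) = (1 / (4 * b)) / 2) by (field; lra). lra. }
 assert (HWpos : 0 < INR W). { assert (0 < 1 / (8 * b)) by (apply Rdiv_lt_0_compat; lra). lra. }
 assert (HW1' : (1 <= W)%nat). { destruct W. simpl in HWpos; lra. lia. }
 assert (HWb : INR W * b <= 1/4).
 { apply (Rmult_le_reg_r (/ b)). apply Rinv_0_lt_compat; lra. rewrite Rmult_assoc, Rinv_r by lra.
   replace (1/4 * / b) with (1 / (4 * b)) by (field; lra). lra. }
 assert (Hwin : forall k, sm (fun i => g (k * W + i)%nat) W <= 2 * (2 * eps / b) + 1).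
 { intros k. apply (window_bound g beta eps W k); auto.
   intros m m' Hm Hm'. apply (near_shift _ ((Z.of_nat m' - Z.of_nat m) * a0)%Z).
   replace ((INR m' - INR m) * beta + IZR ((Z.of_nat m' - Z.of_nat m) * a0))
     with (INR (r + m' * q) * alpha - INR (r + m * q) * alpha).
   apply near_sub; apply Hnear; auto.
   unfold beta. rewrite mult_IZR, minus_IZR, <- !INR_IZR_INZ, !plus_INR, !mult_INR. ring. }
 assert (Hsg : sm g K <= (INR K / INR W + 1) * (2 * (2 * eps / b) + 1)).
 { apply window_count; auto. apply is01_nonneg; auto. }
 assert (HKW : INR K / INR W <= 8 * b * INR K).
 { unfold Rdiv. rewrite (Rmult_comm (8 * b)). apply Rmult_le_compat_l. apply pos_INR.
   replace (8 * b) with (/ (1 / (8 * b))) by (field; lra). apply Rinv_le_contravar; auto.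
   apply Rdiv_lt_0_compat; lra. }
 assert (HA0 : 0 <= 2 * (2 * eps / b) + 1).
 { assert (0 <= 2 * eps / b) by (apply Rmult_le_pos; [lra|left; apply Rinv_0_lt_compat; lra]). lra. }
 assert (Hm1 : M / INR q <= (8 * b * INR K + 1) * (2 * (2 * eps / b) + 1)).
 { eapply Rle_trans; [apply Hgr|]. eapply Rle_trans; [apply Hsg|]. apply Rmult_le_compat_r; auto. lra. }
 set (z := eps * INR q / b).
 assert (Hm2 : M <= 32 * eps * (INR q * INR K) + 8 * b * (INR q * INR K) + 4 * z + INR q).
 { apply (Rmult_le_compat_l (INR q)) in Hm1; [|lra].
   replace (INR q * (M / INR q)) with M in Hm1 by (field; lra).
   replace (INR q * ((8 * b * INR K + 1) * (2 * (2 * eps / b) + 1))) with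
     (32 * eps * (INR q * INR K) + 8 * b * (INR q * INR K) + 4 * z + INR q) in Hm1 by (unfold z; field; lra).
   auto. }
 assert (Hm3 : M <= 96 * eps * INR T + 4 * z + INR q).
 { assert (32 * eps * (INR q * INR K) <= 32 * eps * (INR T + INR q)) by (apply Rmult_le_compat_l; lra).
   assert (8 * b * (INR q * INR K) <= 8 * b * (INR T + INR q)) by (apply Rmult_le_compat_l; lra).
   assert (8 * b * (INR T + INR q) <= 16 * eps * (INR T + INR q)) by (apply Rmult_le_compat_r; lra).
   assert (eps * INR q <= eps * INR T) by (apply Rmult_le_compat_l; lra).
   lra. }
 assert (Hz : M / 8 <= z) by lra.
 unfold z in Hz. apply (Rmult_le_compat_r b) in Hz; [|lra].
 replace (eps * INR q / b * b) with (eps * INR q) in Hz by (field; lra).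
 apply (Rmult_le_reg_r (M / 8)). lra.
 replace (8 * eps * INR q / M * (M / 8)) with (eps * INR q) by (field; lra). lra.
Qed.

Lemma structure (f : nat -> R) (alpha eps : R) (T : nat) :
  is01 f -> (forall i, f i = 1 -> nearZ (INR i * alpha) eps) ->
  0 < eps <= 1/16 -> 2 <= sm f T -> sm f T <= INR T ->
  384 * eps * INR T <= sm f T -> 8 * INR T <= sm f T ^ 2 ->
  exists q : nat, (1 <= q)%nat /\ INR q <= 2 * INR T / sm f T /\
    exists a : Z, Rabs (INR q * alpha - IZR a) <= 16 * eps * INR T / (sm f T ^ 2).
Proof. intros H01 Hn He HM2 HMT HM1 HM3. set (M := sm f T) in *.
 destruct (find_q f alpha eps T H01 Hn HM2) as [q [Hq1 [Hq2 [a Ha]]]]. fold M in Hq2.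
 exists q; split; auto; split; auto. exists a.
 assert (HqT : INR q <= INR T).
 { eapply Rle_trans; [apply Hq2|]. apply (Rmult_le_reg_r M); [lra|].
   replace (2 * INR T / M * M) with (2 * INR T) by (field; lra). pose proof (pos_INR T). nra. }
 assert (H4q : 4 * INR q <= M).
 { assert (4 * (2 * INR T / M) <= M). { apply (Rmult_le_reg_r M); [lra|].
   replace (4 * (2 * INR T / M) * M) with (8 * INR T) by (field; lra). nra. } lra. }
 eapply Rle_trans. apply (refine_q f alpha eps T q a); auto. lra.
 fold M. replace (16 * eps * INR T / M ^ 2) with (8 * eps * (2 * INR T / M) / M) by (field; lra).
 unfold Rdiv. apply Rmult_le_compat_r. left; apply Rinv_0_lt_compat; lra.
 apply Rmult_le_compat_l; lra.
Qed.


Lemma sm_telescope (F : nat -> R) m : sm (fun s => F (S s) - F s) m = F m - F O.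
Proof. induction m; simpl sm. ring. rewrite IHm. ring. Qed.

Lemma geom_cos_bound A B m :
  Rabs (sm (fun s => cos (A + B * INR s)) m) * Rabs (sin (B / 2)) <= 1.
Proof.
 set (F := fun s : nat => sin (A + B * INR s - B / 2)).
 assert (H : forall s, 2 * sin (B / 2) * cos (A + B * INR s) = F (S s) - F s).
 { intros s. unfold F. rewrite S_INR.
   replace (A + B * (INR s + 1) - B / 2) with ((A + B * INR s) + B / 2) by field.
   rewrite sin_plus, sin_minus. ring. }
 assert (H2 : 2 * sin (B / 2) * sm (fun s => cos (A + B * INR s)) m = F m - F O).
 { rewrite <- sm_scal. rewrite <- sm_telescope. apply sm_ext; intros; apply H. }
 assert (Rabs (F m - F O) <= 2).
 { unfold Rminus. eapply Rle_trans; [apply Rabs_triang|]. rewrite Rabs_Ropp.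
   unfold F. pose proof (SIN_bound (A + B * INR m - B / 2)) as h1. 
   pose proof (SIN_bound (A + B * INR 0 - B / 2)). apply abs_le_inv2 in h1. apply abs_le_inv2 in H0. lra. }
 rewrite <- H2 in H0. rewrite !Rabs_mult in H0. rewrite Rabs_right in H0 by lra. lra.
Qed.

Lemma sm_mul f g n m : sm f n * sm g m = sm (fun i => sm (fun j => f i * g j) m) n.
Proof. rewrite Rmult_comm, <- sm_scal. apply sm_ext; intros i _.
 rewrite Rmult_comm, <- sm_scal. apply sm_ext; intros; ring. Qed.

Lemma sq_expand (phi : nat -> R) T :
  (sm (fun s => cos (phi s)) T) ^ 2 + (sm (fun s => sin (phi s)) T) ^ 2 =
  sm (fun s => sm (fun s' => cos (phi s - phi s')) T) T.
Proof. unfold pow; rewrite !Rmult_1_r. rewrite !sm_mul, <- sm_plus.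
 apply sm_ext; intros. rewrite <- sm_plus. apply sm_ext; intros. rewrite cos_minus. ring. Qed.

Lemma sq_diag (F : nat -> nat -> R) T :
  sm (fun s => sm (fun s' => F s s') T) T =
  sm (fun s => F s s) T + sm (fun s => sm (fun s' => F s s') s) T + sm (fun s => sm (fun s' => F s' s) s) T.
Proof. induction T. simpl; ring.
 rewrite sm_S. rewrite (sm_ext (fun s => sm (fun s' => F s s') (S T)) (fun s => sm (fun s' => F s s') T + F s T)).
 2:{ intros; reflexivity. }
 rewrite sm_plus, IHT. simpl sm. ring. Qed.

Lemma tri_diag (F : nat -> nat -> R) T :
  sm (fun s => sm (fun s' => F s s') s) T =
  sm (fun d => sm (fun s' => F (s' + d + 1)%nat s') (T - 1 - d)) T.
Proof. induction T. reflexivity.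
 rewrite sm_S, IHT. rewrite sm_S. replace (S T - 1 - T)%nat with O by lia. simpl (sm _ 0).
 rewrite (sm_ext (fun d => sm (fun s' => F (s' + d + 1)%nat s') (S T - 1 - d))
   (fun d => sm (fun s' => F (s' + d + 1)%nat s') (T - 1 - d) + F T (T - 1 - d)%nat)).
 - rewrite sm_plus. rewrite (sm_rev (fun s' => F T s')). ring.
 - intros d Hd. replace (S T - 1 - d)%nat with (S (T - 1 - d)) by lia. rewrite sm_S. f_equal. f_equal. lia.
Qed.

Definition Dd (theta : R) (T d : nat) : R :=
  Rabs (sm (fun s => cos (2 * PI * theta * (INR (S d) ^ 2) + (4 * PI * theta * INR (S d)) * INR s)) (T - 1 - d)).

Lemma Dd_le_T theta T d : Dd theta T d <= INR T.
Proof. unfold Dd. eapply Rle_trans; [apply sm_abs|]. eapply Rle_trans.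
 apply (sm_le _ (fun _ => 1)). intros; apply abs_le_inv2, COS_bound.
 rewrite sm_const, Rmult_1_r. apply le_INR. lia. Qed.

Lemma Dd_sin theta T d : Dd theta T d * Rabs (sin (PI * (2 * theta) * INR (S d))) <= 1.
Proof. unfold Dd. replace (PI * (2 * theta) * INR (S d)) with (4 * PI * theta * INR (S d) / 2) by field.
 apply geom_cos_bound. Qed.

Lemma Dd_nonneg theta T d : 0 <= Dd theta T d.
Proof. apply Rabs_pos. Qed.

Lemma weyl theta T :
  (sm (fun s => cos (2 * PI * theta * INR s ^ 2)) T) ^ 2 + (sm (fun s => sin (2 * PI * theta * INR s ^ 2)) T) ^ 2
  <= INR T + 2 * sm (fun d => Dd theta T d) T.
Proof. rewrite (sq_expand (fun s => 2 * PI * theta * INR s ^ 2)), sq_diag.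
 set (F := fun s s' : nat => cos (2 * PI * theta * INR s ^ 2 - 2 * PI * theta * INR s' ^ 2)).
 rewrite (sm_ext (fun s => F s s) (fun _ => 1)).
 2:{ intros; unfold F; rewrite Rminus_diag, cos_0; auto. }
 rewrite (sm_ext (fun s => sm (fun s' => F s' s) s) (fun s => sm (fun s' => F s s') s)).
 2:{ intros; apply sm_ext; intros; unfold F. rewrite <- cos_neg. f_equal; ring. }
 rewrite sm_const, tri_diag.
 assert (sm (fun d => sm (fun s' => F (s' + d + 1)%nat s') (T - 1 - d)) T <= sm (fun d => Dd theta T d) T).
 { apply sm_le; intros d _. unfold Dd. eapply Rle_trans; [|apply Rle_abs]. right. apply sm_ext; intros s _.
   unfold F. f_equal. rewrite !plus_INR, !S_INR. simpl INR. ring. }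
 rewrite (tri_diag F). unfold F in *. lra. Qed.


Lemma sin_lb_eq a : sin_lb a = a - a^3/6 + a^5/120 - a^7/5040.
Proof. unfold sin_lb, sin_approx, sin_term. simpl sum_f_R0. simpl. field. Qed.

Lemma sin_lower y : 0 <= y <= 1/2 -> y <= 2 * sin (PI * y).
Proof. intros Hy. pose proof PI2_1. pose proof PI_4.
 set (a := PI * y). assert (Ha : 0 <= a <= 2) by (unfold a; nra).
 destruct (SIN a) as [H1 _]. lra. unfold a; nra.
 rewrite sin_lb_eq in H1.
 assert (Hp : 0 <= 3/5 - (a^2)/6 + (a^2)^2/120 - (a^2)^3/5040).
 { assert (0 <= a^2 <= 4) by nra. set (u := a^2) in *. nra. }
 assert (2/5 * a <= sin a).
 { assert (a - a^3/6 + a^5/120 - a^7/5040 - 2/5 * a = a * (3/5 - (a^2)/6 + (a^2)^2/120 - (a^2)^3/5040)) by field.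
   assert (0 <= a * (3/5 - (a^2)/6 + (a^2)^2/120 - (a^2)^3/5040)) by (apply Rmult_le_pos; lra). lra. }
 unfold a in *. assert (0 <= (PI/2 - 1) * y) by (apply Rmult_le_pos; lra). nra. Qed.

Lemma near_sin x : nearZ x (2 * Rabs (sin (PI * x))).
Proof. set (n := Int_part (x + 1/2)). destruct (base_Int_part (x + 1/2)) as [H1 H2]. fold n in H1, H2.
 exists n. set (y := x - IZR n). assert (Hy : -1/2 <= y < 1/2) by (unfold y; lra).
 assert (Hs : Rabs (sin (PI * x)) = Rabs (sin (PI * y))).
 { replace (PI * x) with (PI * y + IZR n * PI) by (unfold y; ring).
   rewrite sin_plus. rewrite (sin_eq_0_1 (IZR n * PI)) by eauto.
   assert (Hc : cos (IZR n * PI) ^ 2 = 1). { pose proof (sin2_cos2 (IZR n * PI)).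
     rewrite (sin_eq_0_1 (IZR n * PI)) in H by eauto. unfold Rsqr in H. simpl. lra. }
   rewrite Rmult_0_r, Rplus_0_r, Rabs_mult.
   assert (Rabs (cos (IZR n * PI)) = 1).
   { assert (Rabs (cos (IZR n * PI)) ^ 2 = 1) by (rewrite RPow_abs, Hc; apply Rabs_R1).
     pose proof (Rabs_pos (cos (IZR n * PI))). nra. }
   rewrite H; ring. }
 rewrite Hs. fold y.
 destruct (Rle_lt_dec 0 y).
 - rewrite Rabs_right by lra. pose proof (sin_lower y). rewrite Rabs_right. lra.
   apply Rle_ge, sin_ge_0; pose proof PI2_1; nra.
 - rewrite Rabs_left by lra. pose proof (sin_lower (- y)). replace (PI * - y) with (- (PI * y)) in H by ring.
   rewrite sin_neg in H. rewrite Rabs_left1. lra.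
   assert (0 <= sin (PI * - y)). { apply sin_ge_0; pose proof PI2_1; nra. }
   replace (PI * - y) with (- (PI * y)) in H0 by ring. rewrite sin_neg in H0. lra.
Qed.


Lemma sm_pow2 n : sm (fun j => 2 ^ j) n = 2 ^ n - 1.
Proof. induction n; simpl sm. simpl; ring. rewrite IHn. simpl; ring. Qed.

Lemma dyadic_point x J : x < 2 ^ (S J) -> x <= 1 + sm (fun j => 2 ^ j * ind (2 ^ j) x) (S J).
Proof. induction J; intros Hx.
 - simpl sm. simpl in Hx. unfold ind; destruct Rle_dec; simpl in *; lra.
 - rewrite sm_S. destruct (Rlt_le_dec x (2 ^ S J)) as [h|h].
   + pose proof (IHJ h). assert (0 <= 2 ^ S J * ind (2 ^ S J) x).
     { apply Rmult_le_pos. apply pow_le; lra. apply ind_01. } lra.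
   + rewrite (sm_ext _ (fun j => 2 ^ j)). rewrite sm_pow2, ind_1 by auto. simpl in *. lra.
     intros j Hj. rewrite ind_1. ring. eapply Rle_trans; [|apply h]. apply Rle_pow. lra. lia.
Qed.

Lemma dyadic (D : nat -> R) T J : (forall d, D d < 2 ^ (S J)) ->
  sm D T <= INR T + sm (fun j => 2 ^ j * sm (fun d => ind (2 ^ j) (D d)) T) (S J).
Proof. intros HD. eapply Rle_trans. apply (sm_le _ (fun d => 1 + sm (fun j => 2 ^ j * ind (2 ^ j) (D d)) (S J))).
 intros; apply dyadic_point; auto.
 rewrite sm_plus, sm_const, Rmult_1_r. apply Rplus_le_compat_l. rewrite sm_swap.
 right. apply sm_ext; intros. rewrite sm_scal. auto. Qed.


Lemma sym_sum (G : Z -> R) N :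
  sm (fun k => G (Z.of_nat k - Z.of_nat N)%Z) (S (2 * N)) =
  G 0%Z + sm (fun x => G (Z.of_nat (S x)) + G (- Z.of_nat (S x))%Z) N.
Proof. induction N.
 - simpl. ring_simplify. reflexivity.
 - replace (S (2 * S N)) with (S (S (S (2 * N)))) by lia.
   rewrite (sm_S (fun k => G (Z.of_nat k - Z.of_nat (S N))%Z) (S (S (2 * N)))).
   rewrite (sm_shift1 (fun k => G (Z.of_nat k - Z.of_nat (S N))%Z) (S (2 * N))).
   rewrite (sm_S _ N).
   rewrite (sm_ext (fun i => G (Z.of_nat (S i) - Z.of_nat (S N))%Z) (fun k => G (Z.of_nat k - Z.of_nat N)%Z)).
   2:{ intros; f_equal; lia. }
   rewrite IHN. replace (Z.of_nat 0 - Z.of_nat (S N))%Z with (- Z.of_nat (S N))%Z by lia.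
   replace (Z.of_nat (S (S (2 * N))) - Z.of_nat (S N))%Z with (Z.of_nat (S N)) by lia. ring.
Qed.

Lemma g_box_0 w X : g_box w X 0 = 0.
Proof. unfold g_box. simpl. ring. Qed.

Lemma g_box_neg w X x : g_box w X (- Z.of_nat (S x)) = g_box w X (Z.of_nat (S x)).
Proof. reflexivity. Qed.

Lemma ghat_re_eq w X theta : ghat_re w X theta =
  2 * sm (fun x => g_box w X (Z.of_nat (S x)) * cos (2 * PI * theta * INR (S x))) (gN X).
Proof. unfold ghat_re. rewrite sum_f_R0_sm.
 transitivity (sm (fun k => (fun x => g_box w X x * cos (2 * PI * theta * IZR x)) (Z.of_nat k - Z.of_nat (gN X))%Z) (S (2 * gN X))).
 reflexivity. pose proof (sym_sum (fun x => g_box w X x * cos (2 * PI * theta * IZR x)) (gN X)) as E.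
 cbv beta in E |- *. rewrite E. rewrite g_box_0, Rmult_0_l, Rplus_0_l, <- sm_scal.
 apply sm_ext; intros. rewrite g_box_neg, opp_IZR, <- INR_IZR_INZ.
 replace (2 * PI * theta * - INR (S i)) with (- (2 * PI * theta * INR (S i))) by ring. rewrite cos_neg. ring.
Qed.

Lemma ghat_im_eq w X theta : ghat_im w X theta = 0.
Proof. unfold ghat_im. rewrite sum_f_R0_sm.
 transitivity (- sm (fun k => (fun x => g_box w X x * sin (2 * PI * theta * IZR x)) (Z.of_nat k - Z.of_nat (gN X))%Z) (S (2 * gN X))).
 reflexivity. pose proof (sym_sum (fun x => g_box w X x * sin (2 * PI * theta * IZR x)) (gN X)) as E.
 cbv beta in E |- *. rewrite E. rewrite g_box_0, Rmult_0_l, Rplus_0_l.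
 rewrite (sm_ext _ (fun _ => 0)). rewrite sm_zero. ring.
 intros. rewrite g_box_neg, opp_IZR.
 replace (2 * PI * theta * - IZR (Z.of_nat (S i))) with (- (2 * PI * theta * IZR (Z.of_nat (S i)))) by ring.
 rewrite sin_neg. ring.
Qed.

Lemma ghat_abs_eq w X theta : ghat_abs w X theta = Rabs (ghat_re w X theta).
Proof. unfold ghat_abs. rewrite ghat_im_eq. rewrite <- sqrt_Rsqr_abs. f_equal. unfold Rsqr. simpl. ring. Qed.

Lemma sq_reindex (psi : nat -> R) N :
  sm (fun x => if Nat.eqb (Nat.sqrt (S x) * Nat.sqrt (S x)) (S x) then psi (S x) else 0) N =
  sm (fun t => psi (S t * S t)%nat) (Nat.sqrt N).
Proof. induction N. reflexivity.
 rewrite sm_S, IHN. destruct (Nat.sqrt_succ_or N) as [h|h].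
 - rewrite h, sm_S. pose proof (Nat.sqrt_spec (S N)) as h1. pose proof (Nat.sqrt_spec N) as h2.
   rewrite h in h1. assert (S (Nat.sqrt N) * S (Nat.sqrt N) = S N)%nat by lia.
   rewrite H, Nat.eqb_refl. reflexivity.
 - rewrite h. pose proof (Nat.sqrt_spec N) as h2.
   assert (Nat.eqb (Nat.sqrt N * Nat.sqrt N) (S N) = false) by (apply Nat.eqb_neq; lia).
   rewrite H. ring.
Qed.

Definition aw (w : R -> R) (X : R) (t : nat) : R := INR t * w (INR t ^ 2 / X).
Definition cphase (theta : R) (t : nat) : R := cos (2 * PI * theta * INR t ^ 2).

Lemma ghat_re_sq w X theta : ghat_re w X theta =
  2 * sm (fun t => aw w X t * cphase theta t) (S (Nat.sqrt (gN X))).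
Proof. rewrite ghat_re_eq. f_equal.
 rewrite (sm_ext _ (fun x => if Nat.eqb (Nat.sqrt (S x) * Nat.sqrt (S x)) (S x) then
    (fun k => INR (Nat.sqrt k) * w (INR k / X) * cos (2 * PI * theta * INR k)) (S x) else 0)).
 - pose proof (sq_reindex (fun k => INR (Nat.sqrt k) * w (INR k / X) * cos (2 * PI * theta * INR k)) (gN X)) as E.
   cbv beta in E |- *. rewrite E, sm_shift1. unfold aw, cphase. simpl (INR 0). rewrite Rmult_0_l, Rmult_0_l, Rplus_0_l.
   apply sm_ext; intros. rewrite Nat.sqrt_square, mult_INR.
   replace (INR (S i) ^ 2) with (INR (S i) * INR (S i)) by ring. reflexivity.
 - intros. unfold g_box. rewrite Zabs2Nat.id. destruct Nat.eqb; ring.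
Qed.

Lemma abel (a c : nat -> R) n :
  sm (fun t => a t * c t) n = a n * sm c n - sm (fun t => (a (S t) - a t) * sm c (S t)) n.
Proof. induction n. simpl; ring. rewrite !sm_S, IHn. ring. Qed.


Lemma w_lip (w : R -> R)
  (w_smooth : forall (n : nat) (x : R), ex_derive (Derive_n w n) x)
  (w_supp : forall x, 1 < Rabs x -> w x = 0) :
  exists K, 0 <= K /\ forall x y, Rabs (w x - w y) <= K * Rabs (x - y).
Proof.
 assert (Hd : forall x, ex_derive w x) by (intros x; apply (w_smooth O x)).
 assert (Hc : forall x, continuity_pt (Derive w) x).
 { intros x. apply continuity_pt_filterlim. apply (ex_derive_continuous (Derive w)). apply (w_smooth 1%nat x). }
 destruct (continuity_ab_maj (fun x => Rabs (Derive w x)) (-2) 2) as [Mx [HM _]]. lra.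
 { intros c _. apply (continuity_pt_comp (Derive w) Rabs). auto. apply Rcontinuity_abs. }
 set (K := Rabs (Derive w Mx)). exists K. split. apply Rabs_pos.
 assert (Hmvt : forall a b, -2 <= a -> a <= b -> b <= 2 -> Rabs (w b - w a) <= K * (b - a)).
 { intros a b Ha Hab Hb. destruct Hab as [Hab|Hab].
   - destruct (MVT_cor2 w (Derive w) a b Hab) as [c [Hc1 Hc2]].
     { intros c _. apply is_derive_Reals. apply Derive_correct. auto. }
     rewrite Hc1, Rabs_mult, (Rabs_right (b - a)) by lra. apply Rmult_le_compat_r. lra.
     apply (HM c). lra.
   - subst. rewrite Rminus_diag, Rabs_R0. lra. }
 set (cl := fun x => Rmax (-2) (Rmin x 2)).
 assert (Hcl : forall x, w (cl x) = w x).
 { intros x. assert (cl x = x \/ (1 < Rabs (cl x) /\ 1 < Rabs x)).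
   { unfold cl, Rmax, Rmin. repeat destruct Rle_dec;
     first [left; lra | right; split; unfold Rabs; repeat destruct Rcase_abs; lra]. }
   destruct H as [H|[H1 H2]]. rewrite H; auto. rewrite !w_supp; auto. }
 assert (Hclr : forall x, -2 <= cl x <= 2) by (intros; unfold cl, Rmax, Rmin; repeat destruct Rle_dec; lra).
 assert (Hcld : forall x y, x <= y -> cl x <= cl y /\ cl y - cl x <= y - x)
   by (intros; unfold cl, Rmax, Rmin; repeat destruct Rle_dec; lra).
 intros x y. rewrite <- (Hcl x), <- (Hcl y).
 destruct (Rle_lt_dec x y) as [h|h].
 - destruct (Hcld x y h). rewrite Rabs_minus_sym. eapply Rle_trans. apply Hmvt; try apply Hclr; auto.
   apply Rmult_le_compat_l. unfold K; apply Rabs_pos. rewrite Rabs_minus_sym, Rabs_right; lra.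
 - destruct (Hcld y x) as [h1 h2]. lra. eapply Rle_trans. apply Hmvt; try apply Hclr; auto.
   apply Rmult_le_compat_l. unfold K; apply Rabs_pos. rewrite Rabs_right; lra.
Qed.


Lemma gN_bounds X : 0 < X -> X < INR (gN X) <= X + 1.
Proof. intros HX. destruct (archimed X) as [h1 h2]. unfold gN.
 assert (0 < up X)%Z. { apply lt_IZR. lra. }
 rewrite INR_IZR_INZ, Z2Nat.id by lia. lra. Qed.

Lemma reduce (w : R -> R) (K X theta delta : R) :
  (forall x, 0 <= w x <= 1) -> (forall x, 1 < Rabs x -> w x = 0) ->
  0 <= K -> (forall x y, Rabs (w x - w y) <= K * Rabs (x - y)) ->
  4 <= X -> 0 < delta -> delta * X <= ghat_abs w X theta ->
  delta <= 8 * (1 + 6 * K) /\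
  exists T : nat, (1 <= T)%nat /\ INR T ^ 2 <= 4 * X /\
    delta ^ 2 * X / (16 * (1 + 6 * K) ^ 2) <= (sm (cphase theta) T) ^ 2.
Proof. intros Hw Hsupp HK Hlip HX Hd Hg.
 set (K1 := 1 + 6 * K). assert (HK1 : 1 <= K1) by (unfold K1; lra).
 destruct (gN_bounds X) as [HN1 HN2]. lra.
 set (N := gN X) in *. set (SN := Nat.sqrt N). set (n := S SN).
 pose proof (Nat.sqrt_spec N (Nat.le_0_l _)) as Hsq. fold SN in Hsq.
 assert (HSN2 : INR SN ^ 2 <= INR N). { replace (INR SN ^ 2) with (INR (SN * SN)) by (rewrite mult_INR; ring). apply le_INR; lia. }
 assert (Hn2 : INR N < INR n ^ 2). { replace (INR n ^ 2) with (INR (n * n)) by (rewrite mult_INR; ring). apply lt_INR; unfold n; lia. }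
 assert (HSN : INR SN <= INR N). { apply le_INR. destruct SN. lia. nia. }
 assert (Hnn : INR n ^ 2 <= 4 * X). { unfold n. rewrite S_INR. nra. }
 assert (Hn1 : 1 <= INR n) by (unfold n; rewrite S_INR; pose proof (pos_INR SN); lra).
 rewrite ghat_abs_eq, ghat_re_sq in Hg. fold N SN n in Hg.
 rewrite abel in Hg.
 assert (Han : aw w X n = 0).
 { unfold aw. rewrite Hsupp. ring. rewrite Rabs_right.
   apply (Rmult_lt_reg_r X). lra. unfold Rdiv; rewrite Rmult_assoc, Rinv_l by lra. lra.
   apply Rle_ge. apply Rmult_le_pos. apply pow_le, pos_INR. left; apply Rinv_0_lt_compat; lra. }
 rewrite Han, Rmult_0_l, Rminus_0_l, Rabs_mult, Rabs_Ropp, Rabs_right in Hg by lra.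
 set (C := fun t => sm (cphase theta) t) in *.
 assert (HDa : forall t, (t < n)%nat -> Rabs (aw w X (S t) - aw w X t) <= K1).
 { intros t Ht. unfold aw. rewrite S_INR.
   replace ((INR t + 1) * w ((INR t + 1) ^ 2 / X) - INR t * w (INR t ^ 2 / X)) with
     (w ((INR t + 1) ^ 2 / X) + INR t * (w ((INR t + 1) ^ 2 / X) - w (INR t ^ 2 / X))) by ring.
   eapply Rle_trans; [apply Rabs_triang|]. rewrite Rabs_mult, (Rabs_right (INR t)) by (apply Rle_ge, pos_INR).
   assert (h1 : Rabs (w ((INR t + 1) ^ 2 / X)) <= 1) by (apply abs_le_inv2; pose proof (Hw ((INR t + 1) ^ 2 / X)); lra).
   pose proof (Hlip ((INR t + 1) ^ 2 / X) (INR t ^ 2 / X)) as h2.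
   replace ((INR t + 1) ^ 2 / X - INR t ^ 2 / X) with ((2 * INR t + 1) / X) in h2 by (field; lra).
   rewrite (Rabs_right ((2 * INR t + 1) / X)) in h2. 2:{ apply Rle_ge, Rmult_le_pos. pose proof (pos_INR t); lra. left; apply Rinv_0_lt_compat; lra. }
   assert (ht : INR t <= INR SN) by (apply le_INR; unfold n in Ht; lia).
   assert (ht2 : INR t ^ 2 <= X + 1) by (pose proof (pos_INR t); nra).
   assert (h3 : INR t * (K * ((2 * INR t + 1) / X)) <= 6 * K).
   { replace (INR t * (K * ((2 * INR t + 1) / X))) with (K * ((2 * INR t ^ 2 + INR t) / X)) by (field; lra).
     rewrite (Rmult_comm 6 K). apply Rmult_le_compat_l; auto. apply (Rmult_le_reg_r X). lra.
     unfold Rdiv; rewrite Rmult_assoc, Rinv_l by lra. assert (INR t <= INR t ^ 2).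
     { destruct t. simpl; lra. rewrite S_INR. pose proof (pos_INR t). nra. } nra. }
   assert (INR t * Rabs (w ((INR t + 1) ^ 2 / X) - w (INR t ^ 2 / X)) <= INR t * (K * ((2 * INR t + 1) / X)))
     by (apply Rmult_le_compat_l; auto; apply pos_INR).
   unfold K1; lra. }
 assert (Hs1 : delta * X <= 2 * (K1 * sm (fun t => Rabs (C (S t))) n)).
 { eapply Rle_trans; [apply Hg|]. apply Rmult_le_compat_l. lra.
   eapply Rle_trans; [apply sm_abs|]. rewrite <- sm_scal. apply sm_le; intros t Ht.
   rewrite Rabs_mult. apply Rmult_le_compat_r. apply Rabs_pos. apply HDa; auto. }
 destruct (sm_exists_ge (fun t => Rabs (C (S t))) n (delta * X / (2 * K1 * INR n))) as [t [Ht HCt]].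
 unfold n; lia.
 { replace (INR n * (delta * X / (2 * K1 * INR n))) with (delta * X / (2 * K1)) by (field; lra).
   apply (Rmult_le_reg_r (2 * K1)). lra. replace (delta * X / (2 * K1) * (2 * K1)) with (delta * X) by (field; lra). lra. }
 assert (HT : INR (S t) <= INR n) by (apply le_INR; lia).
 assert (HCT : Rabs (C (S t)) <= INR (S t)).
 { unfold C. eapply Rle_trans; [apply sm_abs|]. eapply Rle_trans. apply (sm_le _ (fun _ => 1)).
   intros; unfold cphase; apply abs_le_inv2, COS_bound. rewrite sm_const; lra. }
 assert (Hpos : 0 <= delta * X / (2 * K1 * INR n)).
 { apply Rmult_le_pos. nra. left; apply Rinv_0_lt_compat; nra. }
 split.
 - assert (delta * X / (2 * K1 * INR n) <= INR n) by lra.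
   apply (Rmult_le_compat_r (2 * K1 * INR n)) in H; [|nra].
   replace (delta * X / (2 * K1 * INR n) * (2 * K1 * INR n)) with (delta * X) in H by (field; lra).
   assert (delta * X <= 8 * K1 * X) by nra. nra.
 - exists (S t). split. lia. split. pose proof (pos_INR (S t)); nra.
   assert (Hsq2 : (delta * X / (2 * K1 * INR n)) ^ 2 <= C (S t) ^ 2).
   { rewrite <- (pow2_abs (C (S t))). apply pow_incr. lra. }
   eapply Rle_trans; [|apply Hsq2].
   replace ((delta * X / (2 * K1 * INR n)) ^ 2) with (delta ^ 2 * X * (X / (4 * K1 ^ 2 * INR n ^ 2))) by (field; lra).
   replace (delta ^ 2 * X / (16 * K1 ^ 2)) with (delta ^ 2 * X * (X / (4 * K1 ^ 2 * (4 * X)))) by (field; lra).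
   apply Rmult_le_compat_l. nra. unfold Rdiv. apply Rmult_le_compat_l. lra.
   apply Rinv_le_contravar. nra. nra.
Qed.


Lemma J_bound X J : 1 <= ln X -> 2 ^ J <= X -> INR J + 1 <= 3 * ln X.
Proof. intros HL HJ. assert (H2 : 0 < 2 ^ J) by (apply pow_lt; lra).
 assert (ln (2 ^ J) <= ln X). { destruct (Rle_lt_or_eq_dec _ _ HJ) as [h|h]. left; apply ln_increasing; auto. rewrite h; lra. }
 rewrite ln_pow in H by lra. pose proof ln_lt_2. pose proof (pos_INR J).
 assert (INR J * / 2 <= INR J * ln 2) by (apply Rmult_le_compat_l; lra). lra. Qed.

Lemma core (theta delta X K1 L : R) (T : nat) :
  1 <= K1 -> 1 <= L -> (forall J : nat, 2 ^ J <= X -> INR J + 1 <= 3 * L) ->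
  (1 <= T)%nat -> INR T ^ 2 <= 4 * X -> 4 <= X -> 0 < delta ->
  delta ^ 2 * X / (16 * K1 ^ 2) <= (sm (cphase theta) T) ^ 2 ->
  3 * INR T / 2 <= delta ^ 2 * X / (64 * K1 ^ 2) ->
  768 * (INR T + 1) <= delta ^ 2 * X / (192 * K1 ^ 2 * L) ->
  8 * (INR T + 1) * INR T ^ 2 <= (delta ^ 2 * X / (192 * K1 ^ 2 * L)) ^ 2 ->
  exists (q : nat) (a : Z), (1 <= q)%nat /\
    INR q <= 2 * (INR T + 1) * INR T / (delta ^ 2 * X / (192 * K1 ^ 2 * L)) /\
    Rabs (INR q * (2 * theta) - IZR a) <= 32 * (INR T + 1) * INR T / (delta ^ 2 * X / (192 * K1 ^ 2 * L)) ^ 2.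
Proof. intros HK1 HL HJb HT1 HT2 HX Hd HC Ha Hb Hc.
 set (A' := delta ^ 2 * X / (192 * K1 ^ 2 * L)) in *.
 assert (HA'pos : 0 < A'). { unfold A'. apply Rdiv_lt_0_compat. apply Rmult_lt_0_compat. apply pow_lt; lra. lra.
   apply Rmult_lt_0_compat. nra. lra. }
 assert (HTr : 1 <= INR T) by (apply (le_INR 1); auto).
 pose proof (weyl theta T) as HW. fold (sm (cphase theta) T) in HW.
 assert (HSs : 0 <= (sm (fun s => sin (2 * PI * theta * INR s ^ 2)) T) ^ 2) by apply pow2_ge_0.
 set (J := Nat.log2 T). destruct (Nat.log2_spec T) as [HJ1 HJ2]. lia. fold J in HJ1, HJ2.
 assert (HJ1r : 2 ^ J <= INR T). { rewrite <- (pow_INR 2). apply le_INR; auto. }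
 assert (HJ2r : INR T < 2 ^ S J). { replace 2 with (INR 2) by reflexivity. rewrite <- pow_INR. apply lt_INR; auto. }
 set (D := fun d => Dd theta T d).
 assert (HD : forall d, D d < 2 ^ S J). { intros d. pose proof (Dd_le_T theta T d). unfold D. lra. }
 pose proof (dyadic D T J HD) as Hdy.
 set (Nj := fun j => sm (fun d => ind (2 ^ j) (D d)) T) in Hdy.
 assert (HB0 : delta ^ 2 * X / (64 * K1 ^ 2) <= sm (fun j => 2 ^ j * Nj j) (S J)).
 { assert (delta ^ 2 * X / (64 * K1 ^ 2) = delta ^ 2 * X / (16 * K1 ^ 2) / 2 - delta ^ 2 * X / (64 * K1 ^ 2)) by (field; lra).
   change (sm (fun s => cos (2 * PI * theta * INR s ^ 2)) T) with (sm (cphase theta) T) in HW. change (sm D T) with (sm (fun d => Dd theta T d) T) in Hdy. unfold Nj. lra. }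
 assert (HJL : INR (S J) <= 3 * L). { rewrite S_INR. apply HJb. assert (INR T <= X) by nra. lra. }
 destruct (sm_exists_ge (fun j => 2 ^ j * Nj j) (S J) (A' * / 1)) as [j [Hj HjA]]. lia.
 { rewrite Rinv_1, Rmult_1_r.
   assert (HA1 : A' = delta ^ 2 * X / (64 * K1 ^ 2) / (3 * L)) by (unfold A'; field; lra).
   assert (INR (S J) * A' <= 3 * L * A') by (apply Rmult_le_compat_r; lra).
   assert (3 * L * A' = delta ^ 2 * X / (64 * K1 ^ 2)) by (rewrite HA1; field; lra). lra. }
 rewrite Rinv_1, Rmult_1_r in HjA.
 assert (H2j : 0 < 2 ^ j) by (apply pow_lt; lra).
 assert (H2jT : 2 ^ j <= INR T). { eapply Rle_trans; [|apply HJ1r]. apply Rle_pow. lra. lia. }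
 set (f := fun i => match i with O => 0 | S d => ind (2 ^ j) (D d) end).
 assert (Hf01 : is01 f). { intros [|d]; simpl. auto. unfold ind; destruct Rle_dec; auto. }
 assert (HfM : sm f (S T) = Nj j). { unfold f. rewrite sm_shift1. unfold Nj. ring. }
 set (eps := 2 / 2 ^ j).
 assert (Hfn : forall i, f i = 1 -> nearZ (INR i * (2 * theta)) eps).
 { intros [|d] Hi. simpl in Hi; lra. simpl in Hi.
   assert (HDd : 2 ^ j <= D d) by (apply ind_pos; lra).
   pose proof (near_sin (INR (S d) * (2 * theta))) as Hn.
   pose proof (Dd_sin theta T d) as Hs. fold (D d) in Hs.
   assert (Rabs (sin (PI * (2 * theta) * INR (S d))) <= 1 / 2 ^ j).
   { apply (Rmult_le_reg_l (D d)). lra. replace (D d * (1 / 2 ^ j)) with (D d / 2 ^ j) by (field; lra).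
     apply (Rmult_le_reg_r (2 ^ j)); auto. replace (D d / 2 ^ j * 2 ^ j) with (D d) by (field; lra).
     pose proof (Rabs_pos (sin (PI * (2 * theta) * INR (S d)))). nra. }
   destruct Hn as [m Hm]. exists m. replace (PI * (INR (S d) * (2 * theta))) with (PI * (2 * theta) * INR (S d)) in Hm by ring.
   unfold eps. replace (2 / 2 ^ j) with (2 * (1 / 2 ^ j)) by (field; lra). lra. }
 set (M := Nj j) in *.
 assert (HMT : M <= INR (S T)). { rewrite <- HfM. eapply Rle_trans. apply (sm_le _ (fun _ => 1)).
   intros i _; destruct (Hf01 i); lra. rewrite sm_const; lra. }
 assert (HM0 : 0 <= M). { rewrite <- HfM. apply sm_nonneg; intros; apply is01_nonneg; auto. }
 assert (HMA : A' / 2 ^ j <= M). { apply (Rmult_le_reg_r (2 ^ j)); auto. replace (A' / 2 ^ j * 2 ^ j) with A' by (field; lra). lra. }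
 assert (HMA2 : A' / INR T <= M). { eapply Rle_trans; [|apply HMA]. unfold Rdiv. apply Rmult_le_compat_l. lra.
   apply Rinv_le_contravar; auto. }
 assert (HM2 : 8 * INR (S T) <= M ^ 2).
 { rewrite S_INR. assert ((A' / INR T) ^ 2 <= M ^ 2). { apply pow_incr. split; auto. left; apply Rdiv_lt_0_compat; lra. }
   assert (8 * (INR T + 1) <= (A' / INR T) ^ 2).
   { apply (Rmult_le_reg_r (INR T ^ 2)). nra. replace ((A' / INR T) ^ 2 * INR T ^ 2) with (A' ^ 2) by (field; lra). lra. }
   lra. }
 assert (HM384 : 384 * eps * INR (S T) <= M).
 { unfold eps. rewrite S_INR. apply (Rmult_le_reg_r (2 ^ j)); auto.
   replace (384 * (2 / 2 ^ j) * (INR T + 1) * 2 ^ j) with (768 * (INR T + 1)) by (field; lra). lra. }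
 assert (Heps : 0 < eps) by (unfold eps; apply Rdiv_lt_0_compat; lra).
 assert (HM2' : 2 <= M) by (rewrite S_INR in HM2; nra).
 assert (Heps16 : eps <= 1/16). { rewrite S_INR in HM384, HMT. nra. }
 rewrite <- HfM in *.
 destruct (structure f (2 * theta) eps (S T) Hf01 Hfn (conj Heps Heps16) HM2' HMT HM384 HM2) as [q [Hq1 [Hq2 [a Ha']]]].
 rewrite HfM in *. exists q, a. split; auto. rewrite S_INR in *. split.
 - eapply Rle_trans; [apply Hq2|]. apply (Rmult_le_reg_r (M * A')). nra.
   replace (2 * (INR T + 1) / M * (M * A')) with (2 * (INR T + 1) * A') by (field; lra).
   replace (2 * (INR T + 1) * INR T / A' * (M * A')) with (2 * (INR T + 1) * (INR T * M)) by (field; lra).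
   apply Rmult_le_compat_l. lra. assert (A' <= 2 ^ j * M) by lra. nra.
 - eapply Rle_trans; [apply Ha'|]. unfold eps.
   apply (Rmult_le_reg_r (M ^ 2 * A' ^ 2)). nra.
   replace (16 * (2 / 2 ^ j) * (INR T + 1) / M ^ 2 * (M ^ 2 * A' ^ 2)) with (32 * (INR T + 1) * (A' ^ 2 / 2 ^ j)) by (field; lra).
   replace (32 * (INR T + 1) * INR T / A' ^ 2 * (M ^ 2 * A' ^ 2)) with (32 * (INR T + 1) * (INR T * M ^ 2)) by (field; lra).
   apply Rmult_le_compat_l. lra.
   assert (A' ^ 2 <= (2 ^ j * M) ^ 2) by (apply pow_incr; lra).
   apply (Rmult_le_reg_r (2 ^ j)); auto. replace (A' ^ 2 / 2 ^ j * 2 ^ j) with (A' ^ 2) by (field; lra).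
   assert (2 ^ j * M ^ 2 * 2 ^ j <= INR T * M ^ 2 * 2 ^ j).
   { apply Rmult_le_compat_r; [lra|]. apply Rmult_le_compat_r; [nra|lra]. }
   nra.
Qed.


Lemma pow_lt_base a b n : 0 <= a -> a < b -> (0 < n)%nat -> a ^ n < b ^ n.
Proof. intros Ha Hab Hn. induction n. lia. destruct n. simpl; lra.
 assert (a ^ S n < b ^ S n) by (apply IHn; lia).
 assert (a ^ S n <= b ^ S n) by lra. assert (0 <= a ^ S n) by (apply pow_le; lra).
 change (a * a ^ S n < b * b ^ S n). nra. Qed.

Lemma distZ_le r a : distZ r <= Rabs (r - IZR a).
Proof. unfold distZ. destruct (base_Int_part r) as [h1 h2]. set (k := Int_part r) in *.
 destruct (Z_le_gt_dec a k) as [h|h].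
 - apply IZR_le in h. rewrite Rabs_right by lra. eapply Rle_trans; [apply Rmin_l|]. lra.
 - assert (IZR (k + 1) <= IZR a) by (apply IZR_le; lia). rewrite plus_IZR in H.
   rewrite Rabs_left1 by lra. eapply Rle_trans; [apply Rmin_r|]. lra.
Qed.

Lemma s_facts X : 0 < X ->
  let s := Rpower X (1/40) in
  0 < s /\ s ^ 40 = X /\ Rpower X (- (1/10)) = / s ^ 4 /\ ln X <= 40 * s.
Proof. intros HX s.
 assert (Hs : 0 < s) by (unfold s, Rpower; apply exp_pos).
 assert (Hp : forall n : nat, s ^ n = Rpower X (1/40 * INR n)).
 { intros n. rewrite <- Rpower_pow by auto. unfold s. rewrite Rpower_mult. reflexivity. }
 split; auto. split.
 { rewrite Hp. replace (1/40 * INR 40) with 1. apply Rpower_1; auto. rewrite INR_IZR_INZ. simpl. field. }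
 split.
 { rewrite Rpower_Ropp, Hp. f_equal. f_equal. rewrite INR_IZR_INZ. simpl. field. }
 { assert (X = s ^ 40). { rewrite Hp. replace (1/40 * INR 40) with 1. rewrite Rpower_1; auto. rewrite INR_IZR_INZ. simpl. field. }
   rewrite H, ln_pow by auto. assert (ln s < s).
   { rewrite <- (ln_exp s) at 2. apply ln_increasing; auto. pose proof (exp_ineq1 s). lra. }
   rewrite INR_IZR_INZ. simpl. lra. }
Qed.

Theorem lemma5p4 (w : R -> R)
  (w_smooth : forall (n : nat) (x : R), ex_derive (Derive_n w n) x)
  (w_range : forall x, 0 <= w x <= 1)
  (w_supp : forall x, 1 < Rabs x -> w x = 0)
  (w_half : forall x, Rabs x <= 1/2 -> 1/2 <= w x)
  (w_decay : exists C : R, forall t : R, what_abs w t <= C * exp (- sqrt (Rabs t))) :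
  exists X0 C1 C2 : R,
    forall X delta theta : R,
      X0 <= X ->
      Rpower X (- (1/10)) <= delta ->
      delta * X <= ghat_abs w X theta ->
      exists q : nat, (1 <= q)%nat /\
        INR q <= C1 * (ln X) ^ 2 / delta ^ 4 /\
        distZ (INR q * theta) <= C2 * (ln X) ^ 2 / delta ^ 4 / X.
Proof.
 destruct (w_lip w w_smooth w_supp) as [K [HK Hlip]].
 set (K1 := 1 + 6 * K). assert (HK1 : 1 <= K1) by (unfold K1; lra).
 set (s0 := 100000000 * K1 ^ 4).
 assert (Hs0 : 100000000 <= s0). { unfold s0. assert (1 <= K1 ^ 4) by (apply pow_R1_Rle; lra). lra. }
 exists (s0 ^ 40), (393216 * K1 ^ 4), (9437184 * K1 ^ 4).
 intros X delta theta HX Hdel Hg.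
 assert (HX4 : 4 <= X). { assert (s0 <= s0 ^ 40). { replace s0 with (s0 ^ 1) at 1 by ring. apply Rle_pow; lra || lia. } lra. }
 destruct (s_facts X) as [Hs [HsX [Hrp HLs]]]. lra.
 set (s := Rpower X (1/40)) in *.
 assert (Hss0 : s0 <= s).
 { destruct (Rle_lt_dec s0 s) as [h|h]; auto. exfalso. assert (s ^ 40 < s0 ^ 40) by (apply pow_lt_base; lra || lia). lra. }
 assert (Hd : 0 < delta). { assert (0 < / s ^ 4) by (apply Rinv_0_lt_compat, pow_lt; lra). lra. }
 assert (Hds : 1 <= delta * s ^ 4).
 { rewrite Hrp in Hdel. apply (Rmult_le_compat_r (s ^ 4)) in Hdel. rewrite Rinv_l in Hdel. lra.
   apply pow_nonzero; lra. apply pow_le; lra. }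
 set (L := ln X).
 assert (HL1 : 1 <= L). { unfold L. rewrite <- (ln_exp 1). pose proof exp_le_3.
   destruct (Rle_lt_or_eq_dec (exp 1) X) as [h|h]. lra. left; apply ln_increasing; auto; apply exp_pos. rewrite h; lra. }
 destruct (reduce w K X theta delta w_range w_supp HK Hlip HX4 Hd Hg) as [Hdup [T [HT1 [HT2 HC]]]].
 fold K1 in Hdup, HC.
 assert (HTr : 1 <= INR T) by (apply (le_INR 1); auto).
 assert (HTs : INR T <= 2 * s ^ 20).
 { destruct (Rle_lt_dec (INR T) (2 * s ^ 20)) as [h|h]; auto. exfalso.
   assert (0 <= 2 * s ^ 20) by (pose proof (pow_le s 20); lra).
   assert ((2 * s ^ 20) ^ 2 < INR T ^ 2) by (apply pow_lt_base; lra || lia).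
   replace ((2 * s ^ 20) ^ 2) with (4 * s ^ 40) in H0 by ring. lra. }
 assert (Hd2X : s ^ 32 <= delta ^ 2 * X).
 { rewrite <- HsX. replace (delta ^ 2 * s ^ 40) with ((delta * s ^ 4) ^ 2 * s ^ 32) by ring.
   assert (1 <= (delta * s ^ 4) ^ 2) by (apply pow_R1_Rle; lra).
   assert (0 <= s ^ 32) by (apply pow_le; lra). nra. }
 assert (Hs1 : 1 <= s) by lra.
 assert (HK4 : 1 <= K1 ^ 4) by (apply pow_R1_Rle; lra).
 assert (HK2 : 1 <= K1 ^ 2) by (apply pow_R1_Rle; lra).
 assert (HK42 : K1 ^ 2 <= K1 ^ 4) by (apply Rle_pow; lra || lia).
 set (A' := delta ^ 2 * X / (192 * K1 ^ 2 * L)).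
 assert (HA' : s ^ 31 / (7680 * K1 ^ 2) <= A').
 { unfold A'. apply (Rmult_le_reg_r (7680 * K1 ^ 2 * (192 * K1 ^ 2 * L))). nra.
   replace (s ^ 31 / (7680 * K1 ^ 2) * (7680 * K1 ^ 2 * (192 * K1 ^ 2 * L))) with (s ^ 31 * (192 * K1 ^ 2 * L)) by (field; lra).
   replace (delta ^ 2 * X / (192 * K1 ^ 2 * L) * (7680 * K1 ^ 2 * (192 * K1 ^ 2 * L))) with (delta ^ 2 * X * (7680 * K1 ^ 2)) by (field; lra).
   assert (s ^ 31 * (192 * K1 ^ 2 * L) <= s ^ 31 * (192 * K1 ^ 2 * (40 * s))).
   { apply Rmult_le_compat_l. apply pow_le; lra. apply Rmult_le_compat_l. nra. unfold L; lra. }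
   assert (s ^ 31 * (192 * K1 ^ 2 * (40 * s)) = s ^ 32 * (7680 * K1 ^ 2)) by ring.
   assert (s ^ 32 * (7680 * K1 ^ 2) <= delta ^ 2 * X * (7680 * K1 ^ 2)) by (apply Rmult_le_compat_r; nra).
   lra. }
 assert (Hs20 : 1 <= s ^ 20) by (apply pow_R1_Rle; lra).
 assert (Hpow : forall a b : nat, (a <= b)%nat -> s ^ a <= s ^ b) by (intros; apply Rle_pow; auto).
 assert (Hsbig : 10000000000 * K1 ^ 4 <= s ^ 2).
 { assert (s0 ^ 2 <= s ^ 2) by (apply pow_incr; lra). unfold s0 in H. assert (K1 ^ 4 <= K1 ^ 8) by (apply Rle_pow; lra || lia).
   replace ((100000000 * K1 ^ 4) ^ 2) with (10000000000000000 * K1 ^ 8) in H by ring. nra. }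
 assert (Hsbig1 : 100000000 * K1 ^ 4 <= s) by (unfold s0 in Hss0; lra).
 assert (Ha : 3 * INR T / 2 <= delta ^ 2 * X / (64 * K1 ^ 2)).
 { apply (Rmult_le_reg_r (64 * K1 ^ 2)). nra. replace (delta ^ 2 * X / (64 * K1 ^ 2) * (64 * K1 ^ 2)) with (delta ^ 2 * X) by (field; lra).
   assert (s ^ 20 * s ^ 2 <= s ^ 32). { rewrite <- pow_add. apply Hpow. lia. }
   assert (192 * K1 ^ 2 * s ^ 20 <= s ^ 2 * s ^ 20) by (apply Rmult_le_compat_r; lra).
   nra. }
 assert (Hb : 768 * (INR T + 1) <= A').
 { eapply Rle_trans; [|apply HA']. apply (Rmult_le_reg_r (7680 * K1 ^ 2)). nra.
   replace (s ^ 31 / (7680 * K1 ^ 2) * (7680 * K1 ^ 2)) with (s ^ 31) by (field; lra).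
   assert (s ^ 20 * s ^ 11 = s ^ 31) by (rewrite <- pow_add; auto).
   assert (s <= s ^ 11) by (replace s with (s ^ 1) at 1 by ring; apply Hpow; lia).
   assert (768 * 3 * 7680 * K1 ^ 2 <= s ^ 11) by nra.
   assert (768 * (INR T + 1) * (7680 * K1 ^ 2) <= 768 * 3 * 7680 * K1 ^ 2 * s ^ 20) by nra.
   assert (768 * 3 * 7680 * K1 ^ 2 * s ^ 20 <= s ^ 11 * s ^ 20) by (apply Rmult_le_compat_r; lra).
   nra. }
 assert (Hc : 8 * (INR T + 1) * INR T ^ 2 <= A' ^ 2).
 { assert (HA'0 : 0 <= s ^ 31 / (7680 * K1 ^ 2)) by (apply Rmult_le_pos; [apply pow_le; lra | left; apply Rinv_0_lt_compat; nra]).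
   assert ((s ^ 31 / (7680 * K1 ^ 2)) ^ 2 <= A' ^ 2) by (apply pow_incr; lra).
   eapply Rle_trans; [|apply H].
   replace ((s ^ 31 / (7680 * K1 ^ 2)) ^ 2) with (s ^ 62 / (58982400 * K1 ^ 4)) by (field; lra).
   apply (Rmult_le_reg_r (58982400 * K1 ^ 4)). nra.
   replace (s ^ 62 / (58982400 * K1 ^ 4) * (58982400 * K1 ^ 4)) with (s ^ 62) by (field; lra).
   assert (8 * (INR T + 1) * INR T ^ 2 <= 96 * s ^ 60).
   { assert (INR T + 1 <= 3 * s ^ 20) by lra. assert (INR T ^ 2 <= 4 * s ^ 40) by lra.
     replace (96 * s ^ 60) with (8 * (3 * s ^ 20) * (4 * s ^ 40)) by ring.
     apply Rmult_le_compat. nra. nra. lra. lra. }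
   assert (s ^ 60 * s ^ 2 = s ^ 62) by (rewrite <- pow_add; auto).
   assert (0 <= s ^ 60) by (apply pow_le; lra).
   assert (96 * 58982400 * K1 ^ 4 * s ^ 60 <= s ^ 2 * s ^ 60) by (apply Rmult_le_compat_r; nra).
   nra. }
 assert (HJb : forall J : nat, 2 ^ J <= X -> INR J + 1 <= 3 * L) by (intros; apply J_bound; auto).
 destruct (core theta delta X K1 L T HK1 HL1 HJb HT1 HT2 HX4 Hd HC Ha Hb Hc) as [q [a [Hq1 [Hq2 Hqa]]]].
 fold A' in Hq2, Hqa.
 assert (HA'pos : 0 < A') by (unfold A'; apply Rdiv_lt_0_compat; nra).
 assert (HTT : (INR T + 1) * INR T <= 8 * X) by nra.
 exists (2 * q)%nat. split. lia. split.
 - rewrite mult_INR. simpl (INR 2).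
   assert (INR q <= 16 * X / A').
   { eapply Rle_trans; [apply Hq2|]. unfold Rdiv. apply Rmult_le_compat_r. left; apply Rinv_0_lt_compat; auto. nra. }
   assert (16 * X / A' = 16 * 192 * K1 ^ 2 * L / delta ^ 2) by (unfold A'; field; lra).
   assert (Hd4 : 0 < delta ^ 4) by (apply pow_lt; lra).
   apply (Rmult_le_reg_r (delta ^ 4)); auto.
   replace (393216 * K1 ^ 4 * L ^ 2 / delta ^ 4 * delta ^ 4) with (393216 * K1 ^ 4 * L ^ 2) by (field; lra).
   assert (INR q * delta ^ 4 <= 16 * 192 * K1 ^ 2 * L * delta ^ 2).
   { rewrite H0 in H. apply (Rmult_le_compat_r (delta ^ 4)) in H; [|lra].
     replace (16 * 192 * K1 ^ 2 * L / delta ^ 2 * delta ^ 4) with (16 * 192 * K1 ^ 2 * L * delta ^ 2) in H by (field; lra). lra. }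
   assert (delta ^ 2 <= 64 * K1 ^ 2) by nra.
   assert (L <= L ^ 2) by nra.
   assert (16 * 192 * K1 ^ 2 * L * delta ^ 2 <= 16 * 192 * K1 ^ 2 * L * (64 * K1 ^ 2)) by (apply Rmult_le_compat_l; nra).
   assert (16 * 192 * K1 ^ 2 * L * (64 * K1 ^ 2) = 196608 * K1 ^ 4 * L) by ring.
   assert (196608 * K1 ^ 4 * L <= 196608 * K1 ^ 4 * L ^ 2) by (apply Rmult_le_compat_l; nra).
   nra.
 - eapply Rle_trans. apply (distZ_le _ a). rewrite mult_INR. simpl (INR 2).
   replace ((1 + 1) * INR q * theta) with (INR q * (2 * theta)) by ring.
   eapply Rle_trans; [apply Hqa|].
   assert (0 < A' ^ 2) by (apply pow_lt; auto).
   assert (32 * (INR T + 1) * INR T / A' ^ 2 <= 256 * X / A' ^ 2).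
   { unfold Rdiv. apply Rmult_le_compat_r. left; apply Rinv_0_lt_compat; auto. nra. }
   eapply Rle_trans; [apply H0|]. right. unfold A'. field. split; [lra|]. split; [lra|]. nra.
Qed.
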